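(* If $\bar f:[a,b]\to\mathbb{R}_\mathcal{I}$ is continuous on $[a,b]$, then $\bar f$ is interval Riemann integrable on $[a,b]$.
   Context: An interval number is a closed interval $\bar a=[a_l,a_r]$ with $a_l<a_r$ real; $\mathbb{R}_\mathcal{I}$ is the set of interval numbers. Write $a_c=(a_l+a_r)/2$, $a_w=(a_r-a_l)/2>0$, $\bar a=\langle a_c;a_w\rangle=[a_c-a_w,a_c+a_w]$. Operations: $\bar a+\bar b=\langle a_c+b_c;a_wb_w\rangle$, $k\bar a=\langle ka_c;a_w^k\rangle$ for real $k$. Distance $d(\bar a,\bar b)=\sqrt{(a_c-b_c)^2+(\ln a_w-\ln b_w)^2}$; continuity is with respect to $d$. $\bar f$ is interval Riemann integrable with integral $\bar A\in\mathbb{R}_\mathcal{I}$ if for every $\varepsilon>0$ there is $\delta>0$ such that for every partition $a=t_0<\dots<t_n=b$ with $t_i-t_{i-1}<\delta$ and tags $\xi_i\in[t_{i-1},t_i]$, $d\big(\sum_{i=1}^n(t_i-t_{i-1})\bar f(\xi_i),\bar A\big)<\varepsilon$. *)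

(* Defs.v *)
From Stdlib Require Import Reals Lra.
Open Scope R_scope.

(* An interval number <c; w> = [c - w, c + w] with w > 0. *)
Record Ival := mkIval { ic : R; iw : R; iw_pos : 0 < iw }.

Definition iadd (a b : Ival) : Ival :=
  mkIval (ic a + ic b) (iw a * iw b) (Rmult_lt_0_compat _ _ (iw_pos a) (iw_pos b)).

Definition iscal (k : R) (a : Ival) : Ival :=
  mkIval (k * ic a) (Rpower (iw a) k) (exp_pos _).

Definition izero : Ival := mkIval 0 1 Rlt_0_1.

Definition idist (a b : Ival) : R :=
  sqrt ((ic a - ic b) ^ 2 + (ln (iw a) - ln (iw b)) ^ 2).

Definition icontinuous_on (f : R -> Ival) (a b : R) : Prop :=
  forall x, a <= x <= b ->
  forall eps, 0 < eps -> exists delta, 0 < delta /\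
    forall y, a <= y <= b -> Rabs (y - x) < delta -> idist (f y) (f x) < eps.

Fixpoint iriemann_sum (f : R -> Ival) (t xi : nat -> R) (n : nat) : Ival :=
  match n with
  | O => izero
  | S m => iadd (iriemann_sum f t xi m) (iscal (t (S m) - t m) (f (xi (S m))))
  end.

Definition tagged_partition_fine (a b delta : R) (n : nat) (t xi : nat -> R) : Prop :=
  t O = a /\ t n = b /\
  (forall i, (i < n)%nat -> t i < t (S i)) /\
  (forall i, (i < n)%nat -> t (S i) - t i < delta) /\
  (forall i, (i < n)%nat -> t i <= xi (S i) <= t (S i)).

Definition interval_integral_is (f : R -> Ival) (a b : R) (A : Ival) : Prop :=
  forall eps, 0 < eps -> exists delta, 0 < delta /\
    forall n t xi, tagged_partition_fine a b delta n t xi ->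
      idist (iriemann_sum f t xi n) A < eps.

Definition interval_riemann_integrable (f : R -> Ival) (a b : R) : Prop :=
  exists A : Ival, interval_integral_is f a b A.

(* Main.v *)
Require Import Defs.
From Stdlib Require Import Reals Lra Lia.
From Coquelicot Require Import Coquelicot.
Open Scope R_scope.

Definition cl (a b x : R) := Rmax a (Rmin b x).

Lemma cl_in a b x : a < b -> a <= cl a b x <= b.
Proof. intros; unfold cl, Rmax, Rmin; repeat destruct Rle_dec; lra. Qed.

Lemma cl_id a b x : a <= x <= b -> cl a b x = x.
Proof. intros; unfold cl, Rmax, Rmin; repeat destruct Rle_dec; lra. Qed.

Lemma cl_lip a b x y : a < b -> Rabs (cl a b y - cl a b x) <= Rabs (y - x).
Proof. intros; unfold cl, Rmax, Rmin; repeat destruct Rle_dec; split_Rabs; lra. Qed.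

Lemma cl_cl a b x : a < b -> cl a b (cl a b x) = cl a b x.
Proof. intros; apply cl_id, cl_in; auto. Qed.

Lemma abs_le_sqrt u v : Rabs u <= sqrt (u ^ 2 + v ^ 2).
Proof.
  rewrite <- (sqrt_pow2 (Rabs u)) by apply Rabs_pos.
  apply sqrt_le_1_alt. rewrite pow2_abs. nra.
Qed.

Lemma sqrt_le_sum u v : sqrt (u ^ 2 + v ^ 2) <= Rabs u + Rabs v.
Proof.
  rewrite <- (sqrt_pow2 (Rabs u + Rabs v)) by (pose proof (Rabs_pos u); pose proof (Rabs_pos v); lra).
  apply sqrt_le_1_alt.
  assert (u^2 = Rabs u ^ 2) by (rewrite pow2_abs; auto).
  assert (v^2 = Rabs v ^ 2) by (rewrite pow2_abs; auto).
  pose proof (Rabs_pos u); pose proof (Rabs_pos v). nra.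
Qed.

Section Comp.
Variables (f : R -> Ival) (a b : R) (hab : a < b) (F : Ival -> R).
Hypothesis HF : forall u v, Rabs (F u - F v) <= idist u v.
Hypothesis Hc : icontinuous_on f a b.

Definition hh x := F (f (cl a b x)).

Lemma hh_cont x : continuity_pt hh x.
Proof.
  intros eps Heps.
  destruct (Hc (cl a b x) (cl_in a b x hab) eps Heps) as [d [Hd H]].
  exists d; split; auto. intros y [_ Hy]. unfold R_dist in *. simpl in *. unfold R_dist in *.
  unfold hh. eapply Rle_lt_trans. apply HF. apply H. apply cl_in; auto.
  eapply Rle_lt_trans. apply cl_lip; auto. auto.
Qed.

Lemma hh_unif eps : 0 < eps -> exists d, 0 < d /\
  forall x y, Rabs (x - y) < d -> Rabs (hh x - hh y) < eps.
Proof.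
  intros He. destruct (@Heine_cor2 hh a b (fun x _ => hh_cont x) (mkposreal eps He)) as [[d Hd] H].
  exists d; split; auto. intros x y Hxy.
  assert (hh x = hh (cl a b x)) as E1 by (unfold hh; rewrite cl_cl; auto).
  assert (hh y = hh (cl a b y)) as E2 by (unfold hh; rewrite cl_cl; auto).
  rewrite E1, E2. apply H; try apply cl_in; auto. simpl.
  eapply Rle_lt_trans. rewrite Rabs_minus_sym. apply cl_lip; auto. rewrite Rabs_minus_sym; auto.
Qed.

Lemma hh_ex u v : ex_RInt hh u v.
Proof.
  apply (@ex_RInt_continuous R_CompleteNormedModule). intros z _. apply continuity_pt_filterlim, hh_cont.
Qed.
End Comp.

Fixpoint rsum (h : R -> R) (t xi : nat -> R) (n : nat) : R :=
  match n with
  | O => 0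
  | S m => rsum h t xi m + (t (S m) - t m) * h (xi (S m))
  end.

Lemma rsum_bound (h : R -> R) (ex : forall u v, ex_RInt h u v) eps d
  (Hu : forall x y, Rabs (x - y) < d -> Rabs (h x - h y) < eps)
  (t xi : nat -> R) n :
  (forall i, (i < n)%nat -> t i < t (S i)) ->
  (forall i, (i < n)%nat -> t (S i) - t i < d) ->
  (forall i, (i < n)%nat -> t i <= xi (S i) <= t (S i)) ->
  Rabs (rsum h t xi n - RInt h (t O) (t n)) <= eps * (t n - t O).
Proof.
  induction n as [|n IH]; intros H1 H2 H3.
  - simpl. rewrite RInt_point. unfold zero; simpl. rewrite Rminus_0_r, Rminus_diag, Rabs_R0. lra.
  - simpl.
    rewrite <- (RInt_Chasles h (t O) (t n) (t (S n))) by apply ex.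
    change plus with Rplus.
    assert (Hl : (n < S n)%nat) by lia.
    specialize (H1 n Hl) as Hn1. specialize (H2 n Hl) as Hn2. specialize (H3 n Hl) as Hn3.
    assert (Hloc : Rabs (RInt h (t n) (t (S n)) - (t (S n) - t n) * h (xi (S n)))
                   <= (t (S n) - t n) * eps).
    { assert (E : RInt h (t n) (t (S n)) - (t (S n) - t n) * h (xi (S n)) =
                  RInt (fun x => minus (h x) (h (xi (S n)))) (t n) (t (S n))).
      { rewrite (@RInt_minus R_CompleteNormedModule).
        rewrite (@RInt_const R_CompleteNormedModule). reflexivity.
        apply ex. apply (@ex_RInt_const R_NormedModule). }
      rewrite E. apply abs_RInt_le_const. lra.
      apply (@ex_RInt_minus R_NormedModule). apply ex. apply (@ex_RInt_const R_NormedModule).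
      intros s Hs. left. apply Hu. 
      split_Rabs; lra. }
    assert (IH' := IH (fun i Hi => H1 i (Nat.lt_lt_succ_r _ _ Hi))
                     (fun i Hi => H2 i (Nat.lt_lt_succ_r _ _ Hi))
                     (fun i Hi => H3 i (Nat.lt_lt_succ_r _ _ Hi))).
    replace (rsum h t xi n + (t (S n) - t n) * h (xi (S n)) - (RInt h (t 0%nat) (t n) + RInt h (t n) (t (S n))))
      with ((rsum h t xi n - RInt h (t 0%nat) (t n)) + - (RInt h (t n) (t (S n)) - (t (S n) - t n) * h (xi (S n)))) by ring.
    eapply Rle_trans. apply Rabs_triang. rewrite Rabs_Ropp. nra.
Qed.

Lemma t_bounds a b n (t : nat -> R) :
  t O = a -> t n = b -> (forall i, (i < n)%nat -> t i < t (S i)) ->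
  forall i, (i <= n)%nat -> a <= t i <= b.
Proof.
  intros H0 Hn Hi.
  assert (A : forall i, (i <= n)%nat -> a <= t i).
  { induction i; intros. lra. assert (a <= t i) by (apply IHi; lia).
    assert (t i < t (S i)) by (apply Hi; lia). lra. }
  assert (B : forall k, (k <= n)%nat -> t (n - k)%nat <= b).
  { induction k; intros. rewrite Nat.sub_0_r; lra.
    assert (t (n - k)%nat <= b) by (apply IHk; lia).
    assert (t (n - S k)%nat < t (S (n - S k))) by (apply Hi; lia).
    replace (S (n - S k)) with (n - k)%nat in * by lia. lra. }
  intros i Hin. split. auto. replace i with (n - (n - i))%nat by lia. apply B; lia.
Qed.

Theorem theorem5p3 (f : R -> Ival) (a b : R) (hab : a < b) :
  icontinuous_on f a b -> interval_riemann_integrable f a b.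
Proof.
  intros Hc.
  assert (HF1 : forall u v, Rabs (ic u - ic v) <= idist u v) by (intros; apply abs_le_sqrt).
  assert (HF2 : forall u v, Rabs ((fun w => ln (iw w)) u - (fun w => ln (iw w)) v) <= idist u v).
  { intros; unfold idist; rewrite Rplus_comm; apply abs_le_sqrt. }
  set (g1 := hh f a b ic). set (g2 := hh f a b (fun w => ln (iw w))).
  exists (mkIval (RInt g1 a b) (exp (RInt g2 a b)) (exp_pos _)).
  intros eps He.
  set (e' := eps / (4 * (b - a))).
  assert (He' : 0 < e') by (unfold e'; apply Rdiv_lt_0_compat; lra).
  destruct (hh_unif f a b hab ic HF1 Hc e' He') as [d1 [Hd1 U1]].
  destruct (hh_unif f a b hab _ HF2 Hc e' He') as [d2 [Hd2 U2]].
  exists (Rmin d1 d2). split. apply Rmin_pos; auto.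
  intros n t xi [Ht0 [Htn [Hinc [Hfine Htag]]]].
  assert (Htb := t_bounds a b n t Ht0 Htn Hinc).
  assert (Hxi : forall i, (i < n)%nat -> a <= xi (S i) <= b).
  { intros i Hi. assert (P1 := Htb i ltac:(lia)). assert (P2 := Htb (S i) ltac:(lia)).
    assert (P3 := Htag i Hi). lra. }
  assert (Eq : forall m, (m <= n)%nat ->
     ic (iriemann_sum f t xi m) = rsum g1 t xi m /\
     ln (iw (iriemann_sum f t xi m)) = rsum g2 t xi m).
  { induction m; intros Hm.
    - simpl. split; auto. apply ln_1.
    - destruct (IHm ltac:(lia)) as [E1 E2]. simpl.
      assert (Ex : cl a b (xi (S m)) = xi (S m)) by (apply cl_id, Hxi; lia).
      split.
      + rewrite E1. unfold g1, hh. rewrite Ex. reflexivity.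
      + rewrite ln_mult by (apply iw_pos || apply exp_pos).
        rewrite E2. unfold g2, hh. rewrite Ex.
        unfold Rpower. rewrite ln_exp. reflexivity. }
  destruct (Eq n ltac:(lia)) as [E1 E2].
  assert (Ex1 : forall u v, ex_RInt g1 u v) by (intros; apply hh_ex; auto).
  assert (Ex2 : forall u v, ex_RInt g2 u v) by (intros; apply hh_ex; auto).
  assert (B1 := rsum_bound g1 Ex1 e' (Rmin d1 d2)
     (fun x y H => U1 x y (Rlt_le_trans _ _ _ H (Rmin_l _ _))) t xi n Hinc Hfine Htag).
  assert (B2 := rsum_bound g2 Ex2 e' (Rmin d1 d2)
     (fun x y H => U2 x y (Rlt_le_trans _ _ _ H (Rmin_r _ _))) t xi n Hinc Hfine Htag).
  rewrite Ht0, Htn in B1, B2.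
  unfold idist. simpl. rewrite E1, E2, ln_exp.
  eapply Rle_lt_trans. apply sqrt_le_sum.
  assert (e' * (b - a) = eps / 4) by (unfold e'; field; lra).
  lra.
Qed.
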